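(* Let $h:H\to K$ be an isomorphism between subgroups of a group $G$, and $\mathcal F\subset\mathcal P_G$ an $h$-invariant left-invariant lower family. If $A\subset H$ and $A\notin\tau^\alpha(\mathcal F)$ for some ordinal $\alpha$, then $h(A)\cup z\,h(A)\notin\tau^{\alpha+1}(\mathcal F)$ for every $z\in G\setminus\{e\}$.
   Context: $\mathcal F$ is $h$-invariant if for every $A\subset H$: $A\in\mathcal F$ iff $h(A)\in\mathcal F$. Left-invariant: $xF\in\mathcal F$ for $F\in\mathcal F$, $x\in G$; lower: closed under subsets. $\tau(\mathcal F)=\{A\subset G: xA\cap yA\in\mathcal F$ for all distinct $x,y\in G\}$, $\tau^0(\mathcal F)=\mathcal F$, $\tau^{<\alpha}(\mathcal F)=\bigcup_{\beta<\alpha}\tau^\beta(\mathcal F)$, $\tau^\alpha(\mathcal F)=\tau(\tau^{<\alpha}(\mathcal F))$ for $\alpha>0$. *)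

(* Defs.v *)
Definition set (G : Type) := G -> Prop.
Definition family (G : Type) := set G -> Prop.

Definition is_group {G : Type} (mul : G -> G -> G) (e : G) (inv : G -> G) :=
  (forall x y z, mul x (mul y z) = mul (mul x y) z) /\
  (forall x, mul e x = x) /\ (forall x, mul x e = x) /\
  (forall x, mul (inv x) x = e) /\ (forall x, mul x (inv x) = e).

Definition is_subgroup {G : Type} (mul : G -> G -> G) (e : G) (inv : G -> G)
  (H : set G) :=
  H e /\ (forall x y, H x -> H y -> H (mul x y)) /\ (forall x, H x -> H (inv x)).

Definition is_iso_between {G : Type} (mul : G -> G -> G) (H K : set G)
  (h : G -> G) :=
  (forall x, H x -> K (h x)) /\
  (forall x y, H x -> H y -> h x = h y -> x = y) /\
  (forall y, K y -> exists x, H x /\ h x = y) /\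
  (forall x y, H x -> H y -> h (mul x y) = mul (h x) (h y)).

Definition image {G : Type} (h : G -> G) (A : set G) : set G :=
  fun y => exists x, A x /\ h x = y.

Definition ltrans {G : Type} (mul : G -> G -> G) (x : G) (A : set G) : set G :=
  fun y => exists a, A a /\ y = mul x a.

Definition inter {G : Type} (A B : set G) : set G := fun y => A y /\ B y.
Definition union {G : Type} (A B : set G) : set G := fun y => A y \/ B y.
Definition subset {G : Type} (A B : set G) := forall y, A y -> B y.

Definition h_invariant {G : Type} (H : set G) (h : G -> G) (F : family G) :=
  forall A, subset A H -> (F A <-> F (image h A)).

Definition left_invariant {G : Type} (mul : G -> G -> G) (F : family G) :=
  forall x A, F A -> F (ltrans mul x A).

Definition lower {G : Type} (F : family G) :=
  forall A B, F A -> subset B A -> F B.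

Definition tau {G : Type} (mul : G -> G -> G) (F : family G) : family G :=
  fun A => forall x y, x <> y -> F (inter (ltrans mul x A) (ltrans mul y A)).

(* Ordinals are represented by elements of a well-ordered type (O, lt).
   Transfinite iteration, by well-founded recursion:
     tau^a(F) = F                      if a is the least element (a = 0),
     tau^a(F) = tau(tau^{<a}(F))       if a > 0,
   where tau^{<a}(F) = union over b < a of tau^b(F). *)
Definition is_well_order {O : Type} (lt : O -> O -> Prop) :=
  well_founded lt /\
  (forall a b c, lt a b -> lt b c -> lt a c) /\
  (forall a b, lt a b \/ a = b \/ lt b a).

Definition tau_iter_step {G O : Type} (mul : G -> G -> G) (F : family G)
  (lt : O -> O -> Prop) (a : O) (rec : forall b, lt b a -> family G) : family G :=
  fun A =>
    ((forall b, ~ lt b a) /\ F A) \/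
    ((exists b, lt b a) /\
     tau mul (fun B => exists b (Hb : lt b a), rec b Hb B) A).

Definition tau_iter {G O : Type} (mul : G -> G -> G) (F : family G)
  (lt : O -> O -> Prop) (wf : well_founded lt) : O -> family G :=
  Fix wf (fun _ => family G) (tau_iter_step mul F lt).

Definition is_succ {O : Type} (lt : O -> O -> Prop) (a b : O) :=
  lt a b /\ ~ (exists c, lt a c /\ lt c b).

(* Main.v *)
Require Import Defs.
From Stdlib Require Import Classical FunctionalExtensionality.

Lemma T_unfold {G O : Type} (mul : G -> G -> G) (F : family G)
  (lt : O -> O -> Prop) (wf : well_founded lt) (a : O) :
  tau_iter mul F lt wf a =
  tau_iter_step mul F lt a (fun b _ => tau_iter mul F lt wf b).
Proof.
  unfold tau_iter. refine (Fix_eq wf (fun _ => family G) (tau_iter_step mul F lt) _ a). intros x f g Hfg.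
  assert (f = g) by (extensionality y; extensionality p; apply Hfg).
  subst; reflexivity.
Qed.

Lemma tau_lower {G : Type} (mul : G -> G -> G) (U : family G) :
  lower U -> lower (tau mul U).
Proof.
  intros HU A B HA HBA x y Hxy. apply (HU _ _ (HA x y Hxy)).
  intros w [[a [Ha E1]] [a' [Ha' E2]]]. split; eexists; eauto.
Qed.

Lemma tau_linv {G : Type} (mul : G -> G -> G) e inv (Ggrp : is_group mul e inv)
  (U : family G) : lower U -> left_invariant mul (tau mul U).
Proof.
  destruct Ggrp as [assoc [idl [idr [invl invr]]]].
  intros HU w A HA x y Hxy.
  assert (Hxw : mul x w <> mul y w).
  { intro E. apply Hxy. rewrite <- (idr x), <- (idr y), <- (invr w), !assoc, E.
    reflexivity. }
  apply (HU _ _ (HA _ _ Hxw)).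
  intros v [[a1 [[a [Ha E0]] E1]] [a2 [[a' [Ha' E0']] E2]]]; subst.
  split; [exists a | exists a']; split; auto; rewrite <- !assoc; auto.
Qed.

Lemma incl_tau {G : Type} (mul : G -> G -> G) (U : family G) :
  lower U -> left_invariant mul U -> forall A, U A -> tau mul U A.
Proof.
  intros HU HL A HA x y _. apply HU with (ltrans mul x A).
  - apply HL; auto.
  - intros v [H1 _]; exact H1.
Qed.

Lemma T_props {G O : Type} (mul : G -> G -> G) e inv (Ggrp : is_group mul e inv)
  (F : family G) (Fl : left_invariant mul F) (Flow : lower F)
  (lt : O -> O -> Prop) (wf : well_founded lt) :
  forall a, lower (tau_iter mul F lt wf a) /\ left_invariant mul (tau_iter mul F lt wf a).
Proof.
  intro a. induction a as [a IH] using (well_founded_ind wf).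
  assert (HU : lower (fun B => exists b (Hb : lt b a), tau_iter mul F lt wf b B)).
  { intros A B [b [Hb Tb]] HBA. exists b, Hb. apply (proj1 (IH b Hb)) with A; auto. }
  rewrite (T_unfold mul F lt wf a). unfold tau_iter_step. split.
  - intros A B [[Hm HF]|[Hx Ht]] HBA.
    + left; split; auto. apply Flow with A; auto.
    + right; split; auto. apply (tau_lower mul _ HU) with A; auto.
  - intros x A [[Hm HF]|[Hx Ht]].
    + left; split; auto.
    + right; split; auto. apply (tau_linv mul e inv Ggrp _ HU); auto.
Qed.

Lemma T_mono {G O : Type} (mul : G -> G -> G) e inv (Ggrp : is_group mul e inv)
  (F : family G) (Fl : left_invariant mul F) (Flow : lower F)
  (lt : O -> O -> Prop) (wf : well_founded lt) :
  forall a b A, lt b a -> tau_iter mul F lt wf b A -> tau_iter mul F lt wf a A.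
Proof.
  intros a b A Hb Tb. rewrite (T_unfold mul F lt wf a). unfold tau_iter_step.
  right; split; [exists b; auto|].
  apply incl_tau.
  - intros A' B [c [Hc Tc]] HBA. exists c, Hc.
    apply (proj1 (T_props mul e inv Ggrp F Fl Flow lt wf c)) with A'; auto.
  - intros x A' [c [Hc Tc]]. exists c, Hc.
    apply (proj2 (T_props mul e inv Ggrp F Fl Flow lt wf c)); auto.
  - exists b, Hb; auto.
Qed.

Lemma T_h {G O : Type} (mul : G -> G -> G) e inv (Ggrp : is_group mul e inv)
  (H K : set G) (HH : is_subgroup mul e inv H)
  (h : G -> G) (Hh : is_iso_between mul H K h)
  (F : family G)
  (Fh : h_invariant H h F) (Fl : left_invariant mul F) (Flow : lower F)
  (lt : O -> O -> Prop) (wf : well_founded lt) :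
  forall a A, subset A H -> tau_iter mul F lt wf a (image h A) -> tau_iter mul F lt wf a A.
Proof.
  pose proof Ggrp as Gg.
  destruct Gg as [assoc [idl [idr [invl invr]]]].
  destruct HH as [He [Hmul Hinv]].
  destruct Hh as [_ [hinj [_ hmul]]].
  intro a. induction a as [a IH] using (well_founded_ind wf).
  intros A HA. rewrite !(T_unfold mul F lt wf a). unfold tau_iter_step.
  intros [[Hm HF]|[Hx Ht]].
  - left; split; auto. apply (Fh A HA); auto.
  - right; split; auto. intros x y Hxy.
    destruct (classic (H (mul (inv x) y))) as [Hg | Hng].
    + set (g := mul (inv x) y) in *.
      assert (Hge : g <> e).
      { intro E. apply Hxy. rewrite <- (idr x), <- E. unfold g.
        rewrite assoc, invr, idl. reflexivity. }
      assert (hee : h e = e).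
      { assert (E : h e = mul (h e) (h e)) by (rewrite <- hmul; auto; rewrite idl; auto).
        assert (E2 : mul (inv (h e)) (h e) = mul (inv (h e)) (mul (h e) (h e)))
          by (f_equal; exact E).
        rewrite assoc, invl, idl in E2. symmetry; exact E2. }
      assert (Hhg : e <> h g).
      { intro E. apply Hge. apply hinj; auto. congruence. }
      destruct (Ht e (h g) Hhg) as [c [Hc Tc]].
      assert (T1 : tau_iter mul F lt wf c (image h (inter A (ltrans mul g A)))).
      { apply (proj1 (T_props mul e inv Ggrp F Fl Flow lt wf c)) with (1 := Tc).
        intros w [a1 [[Ha1 [a2 [Ha2 E]]] Ew]]. subst.
        split.
        - exists (h (mul g a2)). split; [exists (mul g a2); auto| rewrite idl; auto].
        - exists (h a2). split; [exists a2; auto| apply hmul; auto]. }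
      apply IH in T1; auto.
      2: { intros w [Hw _]; auto. }
      pose proof (proj2 (T_props mul e inv Ggrp F Fl Flow lt wf c) x _ T1) as T1'.
      exists c, Hc.
      apply (proj1 (T_props mul e inv Ggrp F Fl Flow lt wf c)) with (1 := T1').
      intros w [[a1 [Ha1 E1]] [a2 [Ha2 E2]]].
      exists a1. split; auto. split; auto. exists a2. split; auto.
      unfold g. rewrite <- assoc, <- E2, E1, assoc, invl, idl. reflexivity.
    + destruct (Ht x y Hxy) as [c [Hc Tc]]. exists c, Hc.
      apply (proj1 (T_props mul e inv Ggrp F Fl Flow lt wf c)) with (1 := Tc).
      intros w [[a1 [Ha1 E1]] [a2 [Ha2 E2]]]. exfalso. apply Hng.
      assert (E : mul (inv x) y = mul a1 (inv a2)).
      { rewrite <- (idr (mul (inv x) y)), <- (invr a2), !assoc.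
        rewrite <- (assoc (inv x) y a2), <- E2, E1, assoc, invl, idl. reflexivity. }
      rewrite E. apply Hmul; auto.
Qed.

Theorem lemma6p2
  (G : Type) (mul : G -> G -> G) (e : G) (inv : G -> G)
  (Ggrp : is_group mul e inv)
  (H K : set G) (HH : is_subgroup mul e inv H) (HK : is_subgroup mul e inv K)
  (h : G -> G) (Hh : is_iso_between mul H K h)
  (F : family G)
  (Fh : h_invariant H h F) (Fl : left_invariant mul F) (Flow : lower F)
  (O : Type) (lt : O -> O -> Prop) (wf : well_founded lt)
  (Owo : is_well_order lt)
  (alpha alpha1 : O) (Hsucc : is_succ lt alpha alpha1)
  (A : set G) (HA : subset A H)
  (HnA : ~ tau_iter mul F lt wf alpha A) :
  forall z : G, z <> e ->
    ~ tau_iter mul F lt wf alpha1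
        (union (image h A) (ltrans mul z (image h A))).
Proof.
  pose proof Ggrp as Gg.
  destruct Gg as [assoc [idl [idr [invl invr]]]].
  intros z Hz HT. rewrite (T_unfold mul F lt wf alpha1) in HT.
  unfold tau_iter_step in HT.
  destruct HT as [[Hm _]|[_ Ht]].
  { apply (Hm alpha), Hsucc. }
  assert (Hez : e <> z) by auto.
  destruct (Ht e z Hez) as [b [Hb Tb]].
  pose proof (T_props mul e inv Ggrp F Fl Flow lt wf b) as [Lb Ib].
  assert (T1 : tau_iter mul F lt wf b (ltrans mul z (image h A))).
  { apply Lb with (1 := Tb). intros w Hw. split.
    - exists w. split; [right; auto| rewrite idl; auto].
    - destruct Hw as [c [Hc Ew]]. exists c. split; [left; auto| auto]. }
  pose proof (Ib (inv z) _ T1) as T1'.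
  assert (T2 : tau_iter mul F lt wf b (image h A)).
  { apply Lb with (1 := T1'). intros w Hw. exists (mul z w). split.
    - exists w; auto.
    - rewrite assoc, invl, idl; auto. }
  assert (T3 : tau_iter mul F lt wf alpha (image h A)).
  { destruct Owo as [_ [_ tri]].
    destruct (tri b alpha) as [Hlt|[Heq|Hgt]].
    - apply (T_mono mul e inv Ggrp F Fl Flow lt wf alpha b); auto.
    - subst; auto.
    - exfalso. apply (proj2 Hsucc). exists b; auto. }
  apply HnA. apply (T_h mul e inv Ggrp H K HH h Hh F Fh Fl Flow lt wf); auto.
Qed.
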